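(* Let $L$ be an $\mathbb{M}$-compositional varietal family of logics and let $K\subseteq\mathbb{M}_\xi\Sigma$ be a language with a syntactic algebra. The following statements are equivalent (where $\Delta$ ranges over sort-wise finite subfamilies of $L$, in items (4)–(7) those for which the theory algebras $\Theta_\Delta$ are defined, and $\Gamma$ ranges over alphabets): (1) $K$ is $L$-definable; (2) $K$ is recognised by some $L$-definable algebra; (3) $\mathrm{Syn}(K)$ is $L$-definable; (4) $\mathrm{Syn}(K)$ is a quotient of $\Theta_\Delta\Gamma$ for some $\Delta$ and $\Gamma$; (5) $\mathrm{syn}_K=\varrho\circ\theta_\Delta$ for some $\Delta$ and some surjective morphism $\varrho:\Theta_\Delta\Sigma\to\mathrm{Syn}(K)$; (6) $K$ is recognised by $\Theta_\Delta\Gamma$ for some $\Delta$ and $\Gamma$; (7) $\theta_\Delta:\mathbb{M}\Sigma\to\Theta_\Delta\Sigma$ recognises $K$ for some $\Delta$; (8) $\mathrm{Syn}(K)$ satisfies every $\mathbb{M}$-inequality $s\leq t$ that holds in every theory algebra $\Theta_\Delta\Gamma$; (9) there is some $\Delta$ such that for all $s,t\in\mathbb{M}_\xi\Sigma$, $s\sqsubseteq_{\Delta}t$ implies ($s\in K\Rightarrow t\in K$); (10) ${\sqsubseteq_\Delta}\subseteq{\preceq_K}$ for some $\Delta$.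
   Context: Fix a set $\Xi$ of sorts; $\mathsf{Pos}^\Xi$: $\Xi$-sorted families of partial orders with sort-wise monotone maps. $\mathbb{M}$ is a monad on $\mathsf{Pos}^\Xi$ ($\mathrm{flat},\mathrm{sing}$) preserving injective, surjective, bijective functions and preimages and using the standard ordering. $\mathbb{M}$-algebras $\langle A,\pi\rangle$: $\pi\circ\mathbb{M}\pi=\pi\circ\mathrm{flat}$, $\pi\circ\mathrm{sing}=\mathrm{id}$; morphisms commute with products. Finitary: sort-wise finite and finitely generated. Quotient of $\mathfrak{B}$: codomain of a surjective morphism from $\mathfrak{B}$. A preorder $\sqsubseteq$ containing the order is a congruence ordering if $\mathbb{M}q(s)\leq\mathbb{M}q(t)\Rightarrow\pi(s)\sqsubseteq\pi(t)$, $q$ the quotient map onto the ordered set of classes; then the quotient is an algebra with $\pi\circ\mathbb{M}q=q\circ\pi$. Alphabet: finite unordered $\Sigma$; language: $K\subseteq\mathbb{M}_\xi\Sigma$; a morphism $f:\mathbb{M}\Sigma\to\mathfrak{A}$ recognises $K$ if $K=f^{-1}[P]$ for upwards closed $P\subseteq A_\xi$; an algebra recognises $K$ if some morphism into it does. Contexts with hole of sort $\zeta$: $p\in\mathbb{M}(\Sigma+\{\Box\})$, $p[s]$ the image under the algebra morphism extending $\Box\mapsto s$, $c\mapsto\mathrm{sing}(c)$; $p^{-1}[K]=\{s:p[s]\in K\}$. Syntactic congruence: $s\preceq_K t$ ($s,t$ of sort $\zeta$) iff $p[s]\in K\Rightarrow p[t]\in K$ for all contexts $p\in\mathbb{M}_\xi(\Sigma+\{\Box\})$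 with hole of sort $\zeta$; $K$ has a syntactic algebra if $\preceq_K$ is a congruence ordering with sort-wise finite quotient $\mathrm{Syn}(K)$, $\mathrm{syn}_K$ the quotient morphism. Variety of languages: closed under finite unions, intersections, inverse algebra morphisms $\mathbb{M}\Sigma\to\mathbb{M}\Gamma$, derivatives. Logic: $\Xi$-sorted formulae, models, satisfaction; $M\sqsubseteq_\Delta N$ iff every formula in $\Delta$ true in $M$ is true in $N$. A family of logics $L$ assigns to each alphabet a logic $L[\Sigma]$ with models $\mathbb{M}\Sigma$, and to $f:\Sigma\to\Gamma$ a sort-preserving $\lambda_f:L[\Gamma]\to L[\Sigma]$ with $s\models\lambda_f(\varphi)\iff\mathbb{M}f(s)\models\varphi$. $L$-definable language: $\{s:s\models\varphi\}$ for a formula $\varphi$ of the right sort; for a finite ordered $C$, $K\subseteq\mathbb{M}C$ is $L$-definable if its preimage under $\mathbb{M}\iota$ ($\iota$ identity from $C$ with trivial order) is. Varietal: $L$-definable languages form a variety. Subfamily $\Delta$: $\Delta[\Sigma]\subseteq L[\Sigma]$, sort-wise finite if finite in each sort up to equivalence; $\sqsubseteq_\Delta$ on $\mathbb{M}\Sigma$ means $\sqsubseteq_{\Delta[\Sigma]}$. $L$ is $\mathbb{M}$-compositional if for every finite subfamily $\Phi$ there is a sort-wise finite $\Delta\supseteq\Phi$ with each $\sqsubseteq_{\Delta[\Sigma]}$ a congruence ordering; then $\Theta_\Delta\Sigma:=\mathbb{M}\Sigma/{\sqsubseteq_{\Delta[\Sigma]}}$ with quotient morphism $\theta_\Delta$.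 $C\subseteq A$ finite is $L$-definably embedded if $\pi^{-1}(\uparrow a)\cap\mathbb{M}C$ is $L$-definable for all $a$; $\mathfrak{A}$ is $L$-definable if finitary and all finite subsets are $L$-definably embedded. $\mathbb{M}$-inequalities: for finite unordered $X$, $\widehat{\mathbb{M}}X$ consists of families $(t_\beta)$, indexed by morphisms $\beta:\mathbb{M}X\to\mathfrak{A}$ into finitary algebras, with $t_\beta\in A_\xi$ and $\varphi(t_\beta)=t_{\varphi\circ\beta}$ for morphisms $\varphi$ of finitary algebras (componentwise order), $\mathrm{val}(t;\beta)=t_\beta$; an inequality $s\leq t$ ($s,t\in\widehat{\mathbb{M}}X$ of equal sort) holds in a finitary $\mathfrak{A}$ if $\mathrm{val}(s;\beta)\leq\mathrm{val}(t;\beta)$ for all $\beta:\mathbb{M}X\to\mathfrak{A}$. *)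

(* Defs.v *)
From Stdlib Require Import List FunctionalExtensionality PropExtensionality ProofIrrelevance.
Unset Implicit Arguments.


Record SPos (Xi : Type) := {
  car :> Xi -> Type;
  le : forall x, car x -> car x -> Prop;
  le_refl : forall x a, @le x a a;
  le_trans : forall x a b c, @le x a b -> @le x b c -> @le x a c;
  le_antisym : forall x a b, @le x a b -> @le x b a -> a = b }.
Arguments le {Xi} s {x} _ _.
Arguments car {Xi} s _.
Arguments le_refl {Xi s x} a.
Arguments le_trans {Xi s} {x a b c} _ _.
Arguments le_antisym {Xi s} {x a b} _ _.

Record SMap Xi (A B : SPos Xi) := {
  fn :> forall x, A x -> B x;
  fn_mono : forall x (a b : A x), le A a b -> le B (fn x a) (fn x b) }.
Arguments SMap {Xi} A B.
Arguments fn {Xi A B} s x _.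
Arguments fn_mono {Xi A B} s {x a b} _.

Definition idmap Xi (A : SPos Xi) : SMap A A.
Proof. refine {| fn := fun x (a : A x) => a |}. auto. Defined.
Arguments idmap {Xi} A.

Definition compmap Xi (A B C : SPos Xi) (g : SMap B C) (f : SMap A B) : SMap A C.
Proof. refine {| fn := fun x (a : A x) => g x (f x a) |}. intros x a b h. do 2 apply fn_mono. exact h. Defined.
Arguments compmap {Xi A B C} g f.

Definition sinjective Xi (A B : SPos Xi) (f : SMap A B) : Prop :=
  forall x (a b : A x), f x a = f x b -> a = b.
Definition ssurjective Xi (A B : SPos Xi) (f : SMap A B) : Prop :=
  forall x (b : B x), exists a : A x, f x a = b.
Arguments sinjective {Xi A B} f.
Arguments ssurjective {Xi A B} f.

Definition subP Xi (A : SPos Xi) (C : forall x, A x -> Prop) : SPos Xi.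
Proof.
  refine {| car := fun x => {a : A x | C x a};
            le := fun x a b => le A (proj1_sig a) (proj1_sig b) |}.
  - intros; apply le_refl.
  - intros x a b c h1 h2; eapply le_trans; eauto.
  - intros x [a ha] [b hb] h1 h2; simpl in *.
    pose proof (le_antisym h1 h2); subst. f_equal. apply proof_irrelevance.
Defined.
Arguments subP {Xi} A C.

Definition incl Xi (A : SPos Xi) (C : forall x, A x -> Prop) : SMap (subP A C) A.
Proof. refine {| fn := fun x (a : subP A C x) => proj1_sig a |}. auto. Defined.
Arguments incl {Xi} A C.

Definition LeRel Xi (A : SPos Xi) : SPos Xi.
Proof.
  refine {| car := fun x => {p : A x * A x | le A (fst p) (snd p)};
            le := fun x p q => le A (fst (proj1_sig p)) (fst (proj1_sig q)) /\
                               le A (snd (proj1_sig p)) (snd (proj1_sig q)) |}.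
  - intros; split; apply le_refl.
  - intros x a b c [h1 h2] [h3 h4]; split; eapply le_trans; eauto.
  - intros x [[a1 a2] ha] [[b1 b2] hb] [h1 h2] [h3 h4]; simpl in *.
    pose proof (le_antisym h1 h3); pose proof (le_antisym h2 h4); subst.
    f_equal. apply proof_irrelevance.
Defined.
Arguments LeRel {Xi} A.

Definition pr0 Xi (A : SPos Xi) : SMap (LeRel A) A.
Proof. refine {| fn := fun x (p : LeRel A x) => fst (proj1_sig p) |}. intros x a b [h _]; exact h. Defined.
Definition pr1 Xi (A : SPos Xi) : SMap (LeRel A) A.
Proof. refine {| fn := fun x (p : LeRel A x) => snd (proj1_sig p) |}. intros x a b [_ h]; exact h. Defined.
Arguments pr0 {Xi} A.
Arguments pr1 {Xi} A.

Record Monad (Xi : Type) := {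
  MO :> SPos Xi -> SPos Xi;
  Mmap : forall A B, SMap A B -> SMap (MO A) (MO B);
  flat : forall A, SMap (MO (MO A)) (MO A);
  sing : forall A, SMap A (MO A);
  Mmap_id : forall A x (s : MO A x), Mmap _ _ (idmap A) x s = s;
  Mmap_comp : forall A B C (f : SMap A B) (g : SMap B C) x (s : MO A x),
      Mmap _ _ (compmap g f) x s = Mmap _ _ g x (Mmap _ _ f x s);
  flat_nat : forall A B (f : SMap A B) x (s : MO (MO A) x),
      Mmap _ _ f x (flat A x s) = flat B x (Mmap _ _ (Mmap _ _ f) x s);
  sing_nat : forall A B (f : SMap A B) x (a : A x),
      Mmap _ _ f x (sing A x a) = sing B x (f x a);
  flat_sing : forall A x (s : MO A x), flat A x (sing (MO A) x s) = s;
  flat_Msing : forall A x (s : MO A x), flat A x (Mmap _ _ (sing A) x s) = s;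
  flat_assoc : forall A x (s : MO (MO (MO A)) x),
      flat A x (flat (MO A) x s) = flat A x (Mmap _ _ (flat A) x s);
  M_inj : forall A B (f : SMap A B), sinjective f -> sinjective (Mmap _ _ f);
  M_surj : forall A B (f : SMap A B), ssurjective f -> ssurjective (Mmap _ _ f);
  M_bij : forall A B (f : SMap A B), sinjective f -> ssurjective f ->
      sinjective (Mmap _ _ f) /\ ssurjective (Mmap _ _ f);
  (* preservation of preimages: (Mf)^{-1}[M P] = M (f^{-1}[P]) *)
  M_preim : forall A B (f : SMap A B) (P : forall x, B x -> Prop) x (s : MO A x),
      (exists u : MO (subP B P) x, Mmap _ _ (incl B P) x u = Mmap _ _ f x s) ->
      exists v : MO (subP A (fun y a => P y (f y a))) x, Mmap _ _ (incl _ _) x v = s;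
  M_std : forall A x (s t : MO A x),
      le (MO A) s t <-> exists u : MO (LeRel A) x,
          Mmap _ _ (pr0 A) x u = s /\ Mmap _ _ (pr1 A) x u = t }.
Arguments Mmap {Xi} m {A B} f.
Arguments flat {Xi} m {A}.
Arguments sing {Xi} m {A}.

Definition FinTot Xi (T : Xi -> Type) : Prop :=
  exists l : list {x : Xi & T x}, forall x (a : T x), In (existT _ x a) l.
Definition FinSorted Xi (A : SPos Xi) : Prop :=
  forall x, exists l : list (A x), forall a, In a l.
Arguments FinTot {Xi} T.
Arguments FinSorted {Xi} A.

Definition disc Xi (T : Xi -> Type) : SPos Xi.
Proof.
  refine {| car := T; le := fun x a b => a = b |}; intros; subst; auto.
Defined.
Arguments disc {Xi} T.

Definition discmap Xi (T U : Xi -> Type) (f : forall x, T x -> U x) : SMap (disc T) (disc U).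
Proof. refine (Build_SMap _ (disc T) (disc U) f _). intros x a b h; simpl in *; subst; reflexivity. Defined.
Arguments discmap {Xi T U} f.

Record Alphabet Xi := { alph :> Xi -> Type; alph_fin : FinTot alph }.
Definition APos Xi (S : Alphabet Xi) : SPos Xi := disc S.
Arguments APos {Xi} S.
Arguments Alphabet : clear implicits.
Arguments alph {Xi} a _.
Arguments alph_fin {Xi} a.

Record Alg Xi (M : Monad Xi) := {
  acar :> SPos Xi;
  api : SMap (M acar) acar;
  alg_assoc : forall x (s : M (M acar) x), api x (Mmap M api x s) = api x (flat M x s);
  alg_unit : forall x (a : acar x), api x (sing M x a) = a }.
Arguments api {Xi M} _.
Arguments Alg {Xi} M.
Arguments acar {Xi M} _.
Arguments alg_assoc {Xi M} _ _ _.
Arguments alg_unit {Xi M} _ _ _.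

Record Hom Xi (M : Monad Xi) (A B : Alg M) := {
  hmap :> SMap A B;
  hcomm : forall x (s : M A x), hmap x (api A x s) = api B x (Mmap M hmap x s) }.
Arguments Hom {Xi M} A B.
Arguments hmap {Xi M A B} h.
Arguments hcomm {Xi M A B} h x s.

Definition compH Xi (M : Monad Xi) (A B C : Alg M) (g : Hom B C) (f : Hom A B) : Hom A C.
Proof.
  refine {| hmap := compmap g f |}.
  intros x s. simpl. rewrite (hcomm f), (hcomm g), Mmap_comp. reflexivity.
Defined.
Arguments compH {Xi M A B C} g f.

Definition FreeAlg Xi (M : Monad Xi) (S : Alphabet Xi) : Alg M.
Proof.
  refine {| acar := M (APos S); api := flat M |}.
  - intros; symmetry; apply flat_assoc.
  - intros; apply flat_sing.
Defined.
Arguments FreeAlg {Xi} M S.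

Definition Lang Xi (M : Monad Xi) (S : Alphabet Xi) (xi : Xi) := M (APos S) xi -> Prop.
Arguments Lang {Xi} M S xi.

Definition holeT Xi (S : Alphabet Xi) (z : Xi) : Xi -> Type := fun x => (S x + (z = x))%type.
Arguments holeT {Xi} S z _.

Lemma holeT_fin Xi (S : Alphabet Xi) (z : Xi) : FinTot (holeT S z).
Proof.
  destruct (alph_fin S) as [l Hl].
  exists (existT (holeT S z) z (inr eq_refl) ::
          map (fun p => existT (holeT S z) (projT1 p) (inl (projT2 p))) l).
  intros x [a|e].
  - right. apply (in_map (fun p => existT (holeT S z) (projT1 p) (inl (projT2 p))) l (existT _ x a)).
    apply Hl.
  - left. destruct e. reflexivity.
Qed.

Arguments holeT_fin {Xi} S z.
(* the alphabet Sigma + {box}, box of sort z *)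
Definition SH Xi (S : Alphabet Xi) (z : Xi) : Alphabet Xi :=
  {| alph := holeT S z; alph_fin := holeT_fin S z |}.
Arguments SH {Xi} S z.

Definition fillmap Xi (M : Monad Xi) (S : Alphabet Xi) (z : Xi) (s : M (APos S) z)
  : SMap (APos (SH S z)) (M (APos S)).
Proof.
  refine {| fn := fun x (c : APos (SH S z) x) => match c with
                             | inl a => sing M (A := APos S) x a
                             | inr e => eq_rect z (fun y => M (APos S) y) s x e
                             end |}.
  intros x a b h; simpl in h; subst; apply le_refl.
Defined.
Arguments fillmap {Xi} M {S z} s.

(* p[s] : image of p under the algebra morphism extending box |-> s, c |-> sing c *)
Definition fill Xi (M : Monad Xi) (S : Alphabet Xi) (z xi : Xi)
  (p : M (APos (SH S z)) xi) (s : M (APos S) z) : M (APos S) xi :=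
  flat M xi (Mmap M (fillmap M s) xi p).
Arguments fill {Xi M S z xi} p s.

Definition synle Xi (M : Monad Xi) (S : Alphabet Xi) (xi : Xi) (K : Lang M S xi)
  (z : Xi) (s t : M (APos S) z) : Prop :=
  forall p : M (APos (SH S z)) xi, K (fill p s) -> K (fill p t).
Arguments synle {Xi M S xi} K {z} s t.

Record CPre Xi (A : SPos Xi) := {
  rel :> forall x, A x -> A x -> Prop;
  rel_refl : forall x a, rel x a a;
  rel_trans : forall x a b c, rel x a b -> rel x b c -> rel x a c;
  rel_cont : forall x a b, le A a b -> rel x a b }.
Arguments CPre {Xi} A.
Arguments rel {Xi A} _ x _ _.
Arguments rel_refl {Xi A} _ {x} a.
Arguments rel_trans {Xi A} _ {x a b c} _ _.
Arguments rel_cont {Xi A} _ {x a b} _.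

Definition cls Xi (A : SPos Xi) (R : CPre A) x (a : A x) : A x -> Prop :=
  fun b => R x a b /\ R x b a.
Arguments cls {Xi A} R {x} a _.

Definition QPos Xi (A : SPos Xi) (R : CPre A) : SPos Xi.
Proof.
  refine {| car := fun x => {P : A x -> Prop | exists a, P = cls R a};
            le := fun x P Q => exists a b, proj1_sig P a /\ proj1_sig Q b /\ R x a b |}.
  - intros x [P [a ->]]. exists a, a. simpl. unfold cls.
    repeat split; apply rel_refl.
  - intros x [P [p ->]] [Q [q ->]] [U [u ->]] [a [b [ha [hb hab]]]] [b' [c [hb' [hc hbc]]]].
    simpl in *. unfold cls in *. exists a, c. repeat split; try tauto.
    apply rel_trans with b; [tauto|].
    apply rel_trans with q; [tauto|].
    apply rel_trans with b'; tauto.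
  - intros x [P hP] [Q hQ] [a [b [ha [hb hab]]]] [b' [a' [hb' [ha' hba]]]].
    simpl in *.
    assert (E : P = Q).
    { destruct hP as [p Ep]; destruct hQ as [q Eq]; subst P Q. unfold cls in *.
      assert (Hpq : R x p q).
      { apply rel_trans with a; [tauto|]. apply rel_trans with b; tauto. }
      assert (Hqp : R x q p).
      { apply rel_trans with b'; [tauto|]. apply rel_trans with a'; tauto. }
      apply functional_extensionality; intro c; apply propositional_extensionality.
      split; intros [h1 h2]; split; eauto using rel_trans. }
    subst Q. f_equal. apply proof_irrelevance.
Defined.
Arguments QPos {Xi A} R.

Definition qmap Xi (A : SPos Xi) (R : CPre A) : SMap A (QPos R).
Proof.
  refine (Build_SMap _ A (QPos R) (fun x a => exist _ (cls R a) (ex_intro _ a eq_refl)) _).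
  intros x a b h. exists a, b. simpl. unfold cls.
  repeat split; try apply rel_refl. apply rel_cont; exact h.
Defined.
Arguments qmap {Xi A} R.

Definition cong_ord Xi (M : Monad Xi) (A : Alg M) (R : CPre A) : Prop :=
  forall x (s t : M A x),
    le (M (QPos R)) (Mmap M (qmap R) x s) (Mmap M (qmap R) x t) -> R x (api A x s) (api A x t).
Arguments cong_ord {Xi M A} R.

Definition IsCongOrd Xi (M : Monad Xi) (A : Alg M) (r : forall x, A x -> A x -> Prop) : Prop :=
  exists R : CPre A, (forall x a b, R x a b <-> r x a b) /\ cong_ord R.
Arguments IsCongOrd {Xi M} A r.

Definition HasSynAlg Xi (M : Monad Xi) (S : Alphabet Xi) (xi : Xi) (K : Lang M S xi) : Prop :=
  exists R : CPre (FreeAlg M S),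
    (forall z s t, R z s t <-> synle K s t) /\ cong_ord R /\ FinSorted (QPos R).
Arguments HasSynAlg {Xi M S xi} K.

(* (T, syn) is (a copy of) the quotient algebra M S / (preceq_K), i.e. Syn(K) with syn_K *)
Definition IsSynAlg Xi (M : Monad Xi) (S : Alphabet Xi) (xi : Xi) (K : Lang M S xi)
  (T : Alg M) (syn : Hom (FreeAlg M S) T) : Prop :=
  ssurjective syn /\ forall z (s t : M (APos S) z), le T (syn z s) (syn z t) <-> synle K s t.
Arguments IsSynAlg {Xi M S xi} K {T} syn.

Definition recog Xi (M : Monad Xi) (S : Alphabet Xi) (A : Alg M) (f : Hom (FreeAlg M S) A)
  (xi : Xi) (K : Lang M S xi) : Prop :=
  exists P : A xi -> Prop, (forall a b, le A a b -> P a -> P b) /\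
    forall s, K s <-> P (f xi s).
Arguments recog {Xi M S A} f {xi} K.

Definition algRecog Xi (M : Monad Xi) (S : Alphabet Xi) (A : Alg M) (xi : Xi) (K : Lang M S xi) : Prop :=
  exists f : Hom (FreeAlg M S) A, recog f K.
Arguments algRecog {Xi M S} A {xi} K.

Definition FinSubset Xi (A : SPos Xi) (C : forall x, A x -> Prop) : Prop :=
  FinTot (fun x => {a : A x | C x a}).
Arguments FinSubset {Xi A} C.

Definition FinGen Xi (M : Monad Xi) (A : Alg M) : Prop :=
  exists C : forall x, A x -> Prop, FinSubset C /\
    forall x (a : A x), exists u : M (subP A C) x, api A x (Mmap M (incl A C) x u) = a.
Arguments FinGen {Xi M} A.

Definition Finitary Xi (M : Monad Xi) (A : Alg M) : Prop := FinSorted A /\ FinGen A.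
Arguments Finitary {Xi M} A.

Definition isQuot Xi (M : Monad Xi) (A B : Alg M) : Prop :=
  exists h : Hom A B, ssurjective h.
Arguments isQuot {Xi M} A B.

Record Family Xi (M : Monad Xi) := {
  form : Alphabet Xi -> Xi -> Type;
  sat : forall (S : Alphabet Xi) xi, form S xi -> M (APos S) xi -> Prop;
  lam : forall (S G : Alphabet Xi) (f : forall x, S x -> G x) xi, form G xi -> form S xi;
  lam_sat : forall (S G : Alphabet Xi) (f : forall x, S x -> G x) xi (phi : form G xi)
      (s : M (APos S) xi),
      sat S xi (lam S G f xi phi) s <-> sat G xi phi (Mmap M (discmap f) xi s) }.
Arguments Family {Xi} M.
Arguments form {Xi M} _ _ _.
Arguments sat {Xi M} _ {S xi} _ _.
Arguments lam {Xi M} _ {S G} _ {xi} _.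

Definition defL Xi (M : Monad Xi) (L : Family M) (S : Alphabet Xi) (xi : Xi) (K : Lang M S xi) : Prop :=
  exists phi : form L S xi, forall s, K s <-> sat L phi s.
Arguments defL {Xi M} L {S xi} K.

Definition Varietal Xi (M : Monad Xi) (L : Family M) : Prop :=
  (forall S xi, defL L (fun _ : M (APos S) xi => False)) /\
  (forall S xi, defL L (fun _ : M (APos S) xi => True)) /\
  (forall S xi (K1 K2 : Lang M S xi), defL L K1 -> defL L K2 -> defL L (fun s => K1 s \/ K2 s)) /\
  (forall S xi (K1 K2 : Lang M S xi), defL L K1 -> defL L K2 -> defL L (fun s => K1 s /\ K2 s)) /\
  (forall S G (h : Hom (FreeAlg M S) (FreeAlg M G)) xi (K : Lang M G xi),
      defL L K -> defL L (fun s => K (h xi s))) /\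
  (forall S xi (K : Lang M S xi) z (p : M (APos (SH S z)) xi),
      defL L K -> defL L (fun s : M (APos S) z => K (fill p s))).
Arguments Varietal {Xi M} L.

Definition Subfam Xi (M : Monad Xi) (L : Family M) := forall S xi, form L S xi -> Prop.
Arguments Subfam {Xi M} L.

Definition feq Xi (M : Monad Xi) (L : Family M) S xi (phi psi : form L S xi) : Prop :=
  forall s, sat L phi s <-> sat L psi s.
Arguments feq {Xi M L S xi} phi psi.

Definition SortFin Xi (M : Monad Xi) (L : Family M) (D : Subfam L) : Prop :=
  forall S xi, exists l : list (form L S xi),
    forall phi, D S xi phi -> exists psi, In psi l /\ feq phi psi.
Arguments SortFin {Xi M L} D.

Definition FinFam Xi (M : Monad Xi) (L : Family M) (P : Subfam L) : Prop :=
  exists l : list {S : Alphabet Xi & {xi : Xi & form L S xi}},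
    forall S xi phi, P S xi phi -> In (existT _ S (existT _ xi phi)) l.
Arguments FinFam {Xi M L} P.

Definition tle Xi (M : Monad Xi) (L : Family M) (D : Subfam L) (S : Alphabet Xi)
  x (s t : M (APos S) x) : Prop :=
  forall phi, D S x phi -> sat L phi s -> sat L phi t.
Arguments tle {Xi M L} D S {x} s t.

(* the theory algebras Theta_D are defined *)
Definition ThetaDef Xi (M : Monad Xi) (L : Family M) (D : Subfam L) : Prop :=
  forall S, IsCongOrd (FreeAlg M S) (fun x => @tle _ _ _ D S x).
Arguments ThetaDef {Xi M L} D.

Definition Compositional Xi (M : Monad Xi) (L : Family M) : Prop :=
  forall P : Subfam L, FinFam P ->
    exists D : Subfam L, SortFin D /\ (forall S xi phi, P S xi phi -> D S xi phi) /\ ThetaDef D.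
Arguments Compositional {Xi M} L.

(* (T, th) is (a copy of) Theta_D G = M G / sqsubseteq_{D[G]} with theta_D *)
Definition IsTheta Xi (M : Monad Xi) (L : Family M) (D : Subfam L) (G : Alphabet Xi)
  (T : Alg M) (th : Hom (FreeAlg M G) T) : Prop :=
  ssurjective th /\ forall z (s t : M (APos G) z), le T (th z s) (th z t) <-> tle D G s t.
Arguments IsTheta {Xi M L} D G {T} th.

Definition idC Xi (A : SPos Xi) (C : forall x, A x -> Prop) (hC : FinSubset C) : Alphabet Xi :=
  {| alph := fun x => {a : A x | C x a}; alph_fin := hC |}.
Arguments idC {Xi A C} hC.

Definition iota Xi (A : SPos Xi) (C : forall x, A x -> Prop) (hC : FinSubset C)
  : SMap (APos (idC hC)) (subP A C).
Proof. refine (Build_SMap _ (APos (idC hC)) (subP A C) (fun x a => a) _). intros x a b h; simpl in h; subst; apply le_refl. Defined.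
Arguments iota {Xi A C} hC.

Definition DefEmbedded Xi (M : Monad Xi) (L : Family M) (A : Alg M)
  (C : forall x, A x -> Prop) (hC : FinSubset C) : Prop :=
  forall xi (a : A xi),
    defL L (fun s : M (APos (idC hC)) xi =>
              le A a (api A xi (Mmap M (incl A C) xi (Mmap M (iota hC) xi s)))).
Arguments DefEmbedded {Xi M} L {A C} hC.

Definition LDefAlg Xi (M : Monad Xi) (L : Family M) (A : Alg M) : Prop :=
  Finitary A /\ forall (C : forall x, A x -> Prop) (hC : FinSubset C), DefEmbedded L (A := A) hC.
Arguments LDefAlg {Xi M} L A.

Definition Hat Xi (M : Monad Xi) (X : Alphabet Xi) (xi : Xi) :=
  { t : forall A : Alg M, Finitary A -> Hom (FreeAlg M X) A -> A xi |
    forall (A B : Alg M) (hA : Finitary A) (hB : Finitary B) (phi : Hom A B)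
           (beta : Hom (FreeAlg M X) A),
      phi xi (t A hA beta) = t B hB (compH phi beta) }.
Arguments Hat {Xi} M X xi.

Definition holdsIn Xi (M : Monad Xi) (X : Alphabet Xi) (xi : Xi) (A : Alg M)
  (s t : Hat M X xi) : Prop :=
  forall (hA : Finitary A) (beta : Hom (FreeAlg M X) A),
    le A (proj1_sig s A hA beta) (proj1_sig t A hA beta).

Arguments holdsIn {Xi M X xi} A s t.

(* Main.v *)
Require Import Defs.
From Stdlib Require Import List Classical ClassicalEpsilon FunctionalExtensionality PropExtensionality ProofIrrelevance.
From mathcomp Require classical_sets filter.
Set Bullet Behavior "Strict Subproofs".

Lemma ultra_exists (T : Type) (F0 : (T -> Prop) -> Prop)
  (F0T : F0 (fun _ => True))
  (F0I : forall A C, F0 A -> F0 C -> F0 (fun x => A x /\ C x))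
  (F0S : forall A C, (forall x, A x -> C x) -> F0 A -> F0 C)
  (F0N : forall A, F0 A -> exists x, A x) :
  exists U : (T -> Prop) -> Prop,
    (forall A, F0 A -> U A) /\
    (forall A C, U A -> U C -> U (fun x => A x /\ C x)) /\
    (forall A C, (forall x, A x -> C x) -> U A -> U C) /\
    (forall A, U A -> exists x, A x) /\
    (forall A, U A \/ U (fun x => ~ A x)).
Proof.
  assert (PF : @filter.ProperFilter T F0).
  { apply filter.Build_ProperFilter_ex; [exact F0N|].
    constructor.
    - exact F0T.
    - intros A C HA HC. exact (F0I A C HA HC).
    - intros A C H HA. exact (F0S A C H HA). }
  destruct (filter.ultraFilterLemma PF) as [G [UG sub]].
  exists G. split; [exact sub|].
  assert (FG : @filter.Filter T G) by (destruct UG as [[_ F] _]; exact F).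
  split; [intros A C HA HC; exact (@filter.filterI _ _ FG A C HA HC)|].
  split; [intros A C H HA; exact (@filter.filterS _ _ FG A C H HA)|].
  split.
  - intros A HA. destruct UG as [[NE _] _].
    apply Classical_Prop.NNPP; intro hn. apply NE.
    eapply (@filter.filterS _ _ FG A); [|exact HA].
    intros x hx. exfalso; apply hn; exists x; exact hx.
  - intros A. exact (filter.in_ultra_setVsetC A UG).
Qed.


Section Gen.
Context {Xi : Type} (M : Monad Xi).

Lemma smap_ext (A B : SPos Xi) (f g : SMap A B) :
  (forall x a, f x a = g x a) -> f = g.
Proof.
  destruct f as [f hf], g as [g hg]; simpl; intros H.
  assert (E : f = g).
  { apply functional_extensionality_dep; intro x; apply functional_extensionality; intro a; apply H. }
  subst g. f_equal. apply proof_irrelevance.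
Qed.

Lemma hom_ext (A B : Alg M) (h k : Hom A B) :
  (forall x a, h x a = k x a) -> h = k.
Proof.
  destruct h as [h hh], k as [k hk]; simpl; intros H.
  assert (E : h = k) by (apply smap_ext; exact H).
  subst k. f_equal. apply proof_irrelevance.
Qed.

Lemma Mmap_ext (A B : SPos Xi) (f g : SMap A B) :
  (forall x a, f x a = g x a) -> forall x s, Mmap M f x s = Mmap M g x s.
Proof. intros H; rewrite (smap_ext _ _ f g H); reflexivity. Qed.

Definition dmap (S : Alphabet Xi) (A : SPos Xi) (f : forall x, S x -> A x) : SMap (APos S) A.
Proof. refine (Build_SMap _ (APos S) A f _). intros x a b h; simpl in h; subst; apply le_refl. Defined.

Lemma hom_free (S : Alphabet Xi) (A : Alg M) (h : Hom (FreeAlg M S) A) x s :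
  h x s = api A x (Mmap M (compmap (hmap h) (sing M (A := APos S))) x s).
Proof.
  rewrite Mmap_comp. rewrite <- (hcomm h). simpl. rewrite flat_Msing. reflexivity.
Qed.

Lemma hom_free_eq (S : Alphabet Xi) (A : Alg M) (h k : Hom (FreeAlg M S) A) :
  (forall x (c : S x), h x (sing M (A := APos S) x c) = k x (sing M (A := APos S) x c)) -> forall x s, h x s = k x s.
Proof.
  intros H x s. rewrite (hom_free _ _ h), (hom_free _ _ k). f_equal.
  apply Mmap_ext. intros y c. simpl. apply H.
Qed.

Definition ext (S : Alphabet Xi) (A : Alg M) (g : SMap (APos S) A) : Hom (FreeAlg M S) A.
Proof.
  refine (Build_Hom _ M (FreeAlg M S) A (compmap (api A) (Mmap M g)) _).
  intros x s. simpl.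
  rewrite flat_nat. rewrite <- alg_assoc. rewrite Mmap_comp. reflexivity.
Defined.

Lemma ext_sing (S : Alphabet Xi) (A : Alg M) (g : SMap (APos S) A) x c :
  ext S A g x (sing M (A := APos S) x c) = g x c.
Proof. simpl. rewrite sing_nat. apply alg_unit. Qed.

Lemma lift_hom (S : Alphabet Xi) (A B : Alg M) (e : Hom B A) (f : Hom (FreeAlg M S) A) :
  ssurjective e -> exists h : Hom (FreeAlg M S) B, forall x s, e x (h x s) = f x s.
Proof.
  intros He.
  pose (g := fun x (c : S x) => proj1_sig (constructive_indefinite_description _ (He x (f x (sing M (A := APos S) x c))))).
  exists (ext S B (dmap S B g)).
  intros x s.
  change (compH e (ext S B (dmap S B g)) x s = f x s).
  apply hom_free_eq. intros y c. simpl compH. simpl hmap. 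
  change (e y (ext S B (dmap S B g) y (sing M (A := APos S) y c)) = f y (sing M (A := APos S) y c)).
  rewrite ext_sing. simpl. unfold g.
  destruct (constructive_indefinite_description _ _) as [b hb]. exact hb.
Qed.

Lemma Mmap_le_pw (A B : SPos Xi) (f g : SMap A B) :
  (forall x a, le B (f x a) (g x a)) -> forall x p, le (M B) (Mmap M f x p) (Mmap M g x p).
Proof.
  intros H x p.
  pose (k := Build_SMap _ A (LeRel B)
               (fun y a => exist (fun q : B y * B y => le B (fst q) (snd q)) (f y a, g y a) (H y a))
               (fun y a b hab => conj (fn_mono f hab) (fn_mono g hab))).
  apply (proj2 (M_std _ M B x _ _)).
  exists (Mmap M k x p). split.
  - rewrite <- Mmap_comp. apply Mmap_ext. reflexivity.
  - rewrite <- Mmap_comp. apply Mmap_ext. reflexivity.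
Qed.

End Gen.

Section Quot.
Context {Xi : Type} (M : Monad Xi) (A : SPos Xi) (R : CPre A).

Lemma q_eq x (a b : A x) : R x a b -> R x b a -> qmap R x a = qmap R x b.
Proof.
  intros h1 h2. simpl.
  assert (E : cls R a = cls R b).
  { apply functional_extensionality; intro c; apply propositional_extensionality.
    unfold cls; split; intros [u v]; split; eauto using rel_trans. }
  clear h1 h2. revert E. generalize (ex_intro (fun a0 : A x => cls R a = cls R a0) a eq_refl).
  generalize (ex_intro (fun a0 : A x => cls R b = cls R a0) b eq_refl).
  intros e1 e2 E. revert e2. rewrite E. intros e2. f_equal. apply proof_irrelevance.
Qed.

Lemma q_le x (a b : A x) : R x a b -> le (QPos R) (qmap R x a) (qmap R x b).
Proof.
  intros h. exists a, b. simpl. unfold cls. repeat split; try apply rel_refl; exact h.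
Qed.

Lemma q_le_inv x (a b : A x) : le (QPos R) (qmap R x a) (qmap R x b) -> R x a b.
Proof.
  intros [u [v [h1 [h2 h3]]]]. simpl in *. unfold cls in *.
  apply rel_trans with u; [tauto|]. apply rel_trans with v; tauto.
Qed.

Lemma q_surj : ssurjective (qmap R).
Proof.
  intros x [P [a Ea]]. exists a. simpl. subst P. f_equal; try apply proof_irrelevance.
Qed.

End Quot.

Section QuotAlg.
Context {Xi : Type} (M : Monad Xi) (A : Alg M) (R : CPre A) (HR : cong_ord R).

Definition preQ x (u : M (QPos R) x) : M A x :=
  proj1_sig (constructive_indefinite_description _ (M_surj _ M _ _ (qmap R) (q_surj _ R) x u)).

Lemma preQ_spec x u : Mmap M (qmap R) x (preQ x u) = u.
Proof. unfold preQ. destruct (constructive_indefinite_description _ _); assumption. Qed.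

Definition apiQf x (u : M (QPos R) x) : QPos R x := qmap R x (api A x (preQ x u)).

Lemma QK x (s : M A x) : apiQf x (Mmap M (qmap R) x s) = qmap R x (api A x s).
Proof.
  unfold apiQf. set (s' := preQ x _). assert (E := preQ_spec x (Mmap M (qmap R) x s)).
  fold s' in E.
  apply q_eq; apply HR; rewrite E; apply le_refl.
Qed.

Definition apiQ : SMap (M (QPos R)) (QPos R).
Proof.
  refine (Build_SMap _ _ _ apiQf _).
  intros x u v h. unfold apiQf. apply q_le. apply HR.
  rewrite !preQ_spec. exact h.
Defined.

Definition QAlg : Alg M.
Proof.
  refine {| acar := QPos R; api := apiQ |}.
  - intros x S.
    destruct (M_surj _ M _ _ _ (M_surj _ M _ _ (qmap R) (q_surj _ R)) x S) as [S' <-].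
    simpl.
    rewrite <- Mmap_comp.
    rewrite (Mmap_ext M _ _ (compmap apiQ (Mmap M (qmap R))) (compmap (qmap R) (api A))).
    2:{ intros y a. simpl. apply QK. }
    rewrite Mmap_comp. rewrite QK.
    rewrite <- flat_nat. rewrite QK. rewrite alg_assoc. reflexivity.
  - intros x a. destruct (q_surj _ R x a) as [b <-]. simpl.
    change (apiQf x (sing M x (qmap R x b)) = qmap R x b). rewrite <- sing_nat. rewrite QK. rewrite alg_unit. reflexivity.
Defined.

Definition qhom : Hom A QAlg.
Proof.
  refine (Build_Hom _ M A QAlg (qmap R) _).
  intros x s. simpl. symmetry. apply QK.
Defined.

End QuotAlg.

Fixpoint subs {T : Type} (l : list T) : list (list T) :=
  match l with nil => nil :: nil | a :: l' => map (cons a) (subs l') ++ subs l' end.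

Lemma subs_spec {T : Type} (Q : T -> Prop) (l : list T) :
  exists m, In m (subs l) /\ forall y, In y m <-> (In y l /\ Q y).
Proof.
  induction l as [|a l IH]; simpl.
  - exists nil. split; [left; reflexivity|]. intros y; simpl; tauto.
  - destruct IH as [m [Hm Hs]]. destruct (classic (Q a)) as [Qa|nQa].
    + exists (a :: m). split.
      * apply in_or_app. left. apply in_map. exact Hm.
      * intros y; simpl. rewrite Hs. split.
        -- intros [<-|[h1 h2]]; auto.
        -- intros [[<-|h1] h2]; auto.
    + exists m. split.
      * apply in_or_app. right. exact Hm.
      * intros y. rewrite Hs. split.
        -- intros [h1 h2]; auto.
        -- intros [[<-|h1] h2]; [contradiction|auto].
Qed.

Section Logic.
Context {Xi : Type} (M : Monad Xi) (L : Family M) (HLv : Varietal L).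

Lemma defL_ext S x (K1 K2 : Lang M S x) : (forall s, K1 s <-> K2 s) -> defL L K1 -> defL L K2.
Proof. intros H [phi Hphi]. exists phi. intros s. rewrite <- H. apply Hphi. Qed.

Lemma defL_sat S x (phi : form L S x) : defL L (fun s => sat L phi s).
Proof. exists phi. intros s; tauto. Qed.

Lemma fin_union {T : Type} S x (l : list T) (E : T -> Prop) (Lg : T -> Lang M S x) :
  (forall a, In a l -> E a -> defL L (Lg a)) ->
  defL L (fun s => exists a, In a l /\ E a /\ Lg a s).
Proof.
  destruct HLv as (vF & vT & vU & vI & vH & vD).
  induction l as [|a l IH]; intros H.
  - eapply defL_ext; [|apply (vF S x)]. intros s; simpl. split; [tauto|]. intros [a [[] _]].
  - assert (IH' := IH (fun b hb => H b (or_intror hb))).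
    destruct (classic (E a)) as [Ea|nEa].
    + eapply defL_ext; [|apply (vU _ _ _ _ (H a (or_introl eq_refl) Ea) IH')].
      intros s; simpl. split.
      * intros [h|[b [hb [eb lb]]]]; [exists a; auto|exists b; auto].
      * intros [b [[<-|hb] [eb lb]]]; [left; auto|right; exists b; auto].
    + eapply defL_ext; [|exact IH'].
      intros s; simpl. split.
      * intros [b [hb [eb lb]]]; exists b; auto.
      * intros [b [[<-|hb] [eb lb]]]; [contradiction|exists b; auto].
Qed.

Lemma all_sat S x (m : list (form L S x)) : defL L (fun s => forall y, In y m -> sat L y s).
Proof.
  destruct HLv as (vF & vT & vU & vI & vH & vD).
  induction m as [|a m IH].
  - eapply defL_ext; [|apply (vT S x)]. intros s; simpl; split; [intros _ y []|intros _; exact I].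
  - eapply defL_ext; [|apply (vI _ _ _ _ (defL_sat S x a) IH)].
    intros s; simpl. split.
    + intros [h1 h2] y [<-|hy]; auto.
    + intros h; split; auto.
Qed.

Definition sigf (D : Subfam L) S x (s : M (APos S) x) (psi : form L S x) : Prop :=
  exists phi, D S x phi /\ sat L phi s /\ feq phi psi.

Lemma tle_sig (D : Subfam L) S x (l : list (form L S x)) :
  (forall phi, D S x phi -> exists psi, In psi l /\ feq phi psi) ->
  forall s t, tle D S s t <-> (forall psi, In psi l -> sigf D S x s psi -> sat L psi t).
Proof.
  intros Hl s t. split.
  - intros H psi _ [phi [h1 [h2 h3]]]. apply h3. apply H; auto.
  - intros H phi h1 h2. destruct (Hl phi h1) as [psi [hp hf]].
    apply hf. apply H; auto. exists phi; auto.
Qed.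

Lemma uc_def (D : Subfam L) S x (HD : SortFin D) (U : Lang M S x) :
  (forall s t, tle D S s t -> U s -> U t) -> defL L U.
Proof.
  intros HU. destruct (HD S x) as [l Hl].
  eapply defL_ext with (K1 := fun t => exists m, In m (subs l) /\
      (exists s, U s /\ forall y, In y m <-> (In y l /\ sigf D S x s y)) /\
      (forall y, In y m -> sat L y t)).
  2:{ apply fin_union. intros m _ _. apply all_sat. }
  intros t. split.
  - intros [m [_ [[s [Us Hs]] Ht]]]. apply (HU s t); auto.
    apply (proj2 (tle_sig D S x l Hl s t)). intros y hy hs. apply Ht. apply Hs; auto.
  - intros Ut. destruct (subs_spec (sigf D S x t) l) as [m [Hm Hs]].
    exists m. split; [exact Hm|]. split; [exists t; auto|].
    intros y hy. apply Hs in hy. destruct hy as [_ [phi [h1 [h2 h3]]]]. apply h3; exact h2.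
Qed.

Lemma pull_def (D : Subfam L) G (HD : SortFin D) (A : Alg M) (e : Hom (FreeAlg M G) A)
  (He : ssurjective e) (Hm : forall z (s t : M (APos G) z), tle D G s t -> le A (e z s) (e z t))
  S (f : Hom (FreeAlg M S) A) x (Q : A x -> Prop) (HQ : forall a b, le A a b -> Q a -> Q b) :
  defL L (fun s => Q (f x s)).
Proof.
  destruct HLv as (vF & vT & vU & vI & vH & vD).
  destruct (lift_hom M S A _ e f He) as [h Hh].
  assert (HU : defL L (fun u : M (APos G) x => Q (e x u))).
  { apply (uc_def D G x HD). intros s t hst. apply HQ. apply Hm. exact hst. }
  eapply defL_ext; [|exact (vH S G h x _ HU)].
  intros s; simpl. rewrite Hh. tauto.
Qed.

End Logic.

Section Fin.
Context {Xi : Type} (M : Monad Xi).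

Lemma img_fin (S : Alphabet Xi) (A : SPos Xi) (g : forall x, S x -> A x) :
  FinSubset (fun x a => exists c, g x c = a).
Proof.
  destruct (alph_fin S) as [l Hl].
  exists (map (fun p : {x : Xi & S x} => existT (fun x => {a : A x | exists c, g x c = a})
             (projT1 p) (exist _ (g (projT1 p) (projT2 p)) (ex_intro _ (projT2 p) eq_refl))) l).
  intros x [a Ha]. destruct Ha as [c Hc] eqn:E. subst a.
  apply in_map_iff. exists (existT _ x c). split; [|apply Hl].
  simpl. f_equal. all: try f_equal. all: try apply proof_irrelevance.
Qed.

Lemma fingen_surj (S : Alphabet Xi) (A : Alg M) (e : Hom (FreeAlg M S) A) :
  ssurjective e -> FinGen A.
Proof.
  intros He.
  exists (fun x a => exists c : S x, e x (sing M (A := APos S) x c) = a).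
  split; [apply img_fin|].
  intros x a. destruct (He x a) as [s <-].
  set (C := fun x a => exists c : S x, e x (sing M (A := APos S) x c) = a).
  pose (k := dmap S (subP A C) (fun y c => exist (C y) (e y (sing M (A := APos S) y c)) (ex_intro _ c eq_refl))).
  exists (Mmap M k x s).
  rewrite <- Mmap_comp. rewrite (hom_free M S A e). f_equal. apply Mmap_ext. intros y c. reflexivity.
Qed.

Lemma cong_fill (S : Alphabet Xi) (R : CPre (FreeAlg M S)) (HR : cong_ord R) z x
  (p : M (APos (SH S z)) x) (s t : M (APos S) z) :
  R z s t -> R x (fill p s) (fill p t).
Proof.
  intros Hst. unfold fill. apply (HR x (Mmap M (fillmap M s) x p) (Mmap M (fillmap M t) x p)).
  rewrite <- !Mmap_comp. apply Mmap_le_pw.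
  intros y [a|e].
  - simpl. apply q_le. apply rel_refl.
  - destruct e. simpl. apply q_le. exact Hst.
Qed.

End Fin.

Section Theta.
Context {Xi : Type} (M : Monad Xi) (L : Family M).

Definition Dl (Sg : Alphabet Xi) (xi : Xi) (F : list (form L Sg xi)) : Subfam L :=
  fun S x psi => In (existT (fun S => {x : Xi & form L S x}) S (existT _ x psi))
                    (map (fun psi' => existT (fun S => {x : Xi & form L S x}) Sg (existT _ xi psi')) F).

Lemma Dl_in Sg xi F psi : In psi F -> Dl Sg xi F Sg xi psi.
Proof. intros H. unfold Dl. apply in_map_iff. exists psi; auto. Qed.

Lemma Dl_finfam Sg xi F : FinFam (Dl Sg xi F).
Proof.
  exists (map (fun psi' => existT (fun S => {x : Xi & form L S x}) Sg (existT _ xi psi')) F).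
  intros S x psi H. exact H.
Qed.

Lemma Dl_sortfin Sg xi F : SortFin (Dl Sg xi F).
Proof.
  intros S x.
  exists (flat_map (fun psi' =>
     match excluded_middle_informative (exists psi : form L S x,
        existT (fun S => {x : Xi & form L S x}) S (existT _ x psi) =
        existT (fun S => {x : Xi & form L S x}) Sg (existT _ xi psi')) with
     | left h => proj1_sig (constructive_indefinite_description _ h) :: nil
     | right _ => nil end) F).
  intros psi H. unfold Dl in H. apply in_map_iff in H. destruct H as [psi' [E Hin]].
  exists psi. split; [|intros s; tauto].
  apply in_flat_map. exists psi'. split; [exact Hin|].
  destruct (excluded_middle_informative _) as [h|h].
  - destruct (constructive_indefinite_description _ h) as [psi0 E0]. simpl. left.
    rewrite E in E0. apply inj_pair2 in E0. apply inj_pair2 in E0. exact E0.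
  - exfalso. apply h. exists psi. symmetry. exact E.
Qed.

Lemma theta_exists (D : Subfam L) (HD : ThetaDef D) (S : Alphabet Xi) :
  exists (T : Alg M) (th : Hom (FreeAlg M S) T), IsTheta D S th.
Proof.
  destruct (HD S) as [R [HRe HR]].
  exists (QAlg M (FreeAlg M S) R HR), (qhom M (FreeAlg M S) R HR).
  split.
  - apply q_surj.
  - intros z s t. simpl. rewrite <- HRe. split; [apply q_le_inv|apply q_le].
Qed.

Lemma theta_finitary (D : Subfam L) (HD : SortFin D) (S : Alphabet Xi) (T : Alg M)
  (th : Hom (FreeAlg M S) T) (Ht : IsTheta D S th) : Finitary T.
Proof.
  destruct Ht as [Hs Hle]. split; [|eapply fingen_surj; exact Hs].
  intros z. destruct (HD S z) as [l Hl].
  destruct (classic (inhabited (T z))) as [[c0]|nE].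
  2:{ exists nil. intros a. exfalso; apply nE; constructor; exact a. }
  pose (P := fun (m : list (form L S z)) (c : T z) => exists s, th z s = c /\
               forall y, In y m <-> (In y l /\ sigf M L D S z s y)).
  exists (map (fun m => epsilon (inhabits c0) (P m)) (subs l)).
  intros c. destruct (Hs z c) as [s <-].
  destruct (subs_spec (sigf M L D S z s) l) as [m [Hm Hms]].
  apply in_map_iff. exists m. split; [|exact Hm].
  assert (HP : P m (th z s)) by (exists s; auto).
  assert (HE := epsilon_spec (inhabits c0) (P m) (ex_intro _ _ HP)).
  destruct HE as [s' [E' Hs']]. rewrite <- E'.
  assert (Hsig : forall y, In y l -> (sigf M L D S z s y <-> sigf M L D S z s' y)).
  { intros y hy. split; intros h.
    - assert (Hy : In y m) by (apply Hms; auto). apply Hs' in Hy. tauto.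
    - assert (Hy : In y m) by (apply Hs'; auto). apply Hms in Hy. tauto. }
  apply le_antisym; apply Hle; apply (proj2 (tle_sig M L D S z l Hl _ _));
    intros y hy hsig.
  - apply (proj2 (Hsig y hy)) in hsig. destruct hsig as [phi [h1 [h2 h3]]]; apply h3; exact h2.
  - apply (proj1 (Hsig y hy)) in hsig. destruct hsig as [phi [h1 [h2 h3]]]; apply h3; exact h2.
Qed.

End Theta.

Section Factor.
Context {Xi : Type} (M : Monad Xi).

Lemma factor (B A1 A2 : Alg M) (e1 : Hom B A1) (e2 : Hom B A2) (H1 : ssurjective e1)
  (Hm : forall z s t, le A1 (e1 z s) (e1 z t) -> le A2 (e2 z s) (e2 z t)) :
  exists rho : Hom A1 A2, forall z s, e2 z s = rho z (e1 z s).
Proof.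
  pose (pre := fun x (c : A1 x) => proj1_sig (constructive_indefinite_description _ (H1 x c))).
  assert (Hpre : forall x c, e1 x (pre x c) = c).
  { intros x c. unfold pre. destruct (constructive_indefinite_description _ _); assumption. }
  assert (WD : forall z s t, e1 z s = e1 z t -> e2 z s = e2 z t).
  { intros z s t E. apply le_antisym; apply Hm; rewrite E; apply le_refl. }
  assert (mono : forall x (c d : A1 x), le A1 c d -> le A2 (e2 x (pre x c)) (e2 x (pre x d))).
  { intros x c d h. apply Hm. rewrite !Hpre. exact h. }
  pose (r := Build_SMap _ A1 A2 (fun x c => e2 x (pre x c)) mono).
  assert (Hr : forall z s, e2 z s = r z (e1 z s)).
  { intros z s. simpl. apply WD. rewrite Hpre. reflexivity. }
  assert (Hh : forall x (u : M A1 x), r x (api A1 x u) = api A2 x (Mmap M r x u)).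
  { intros x u. destruct (M_surj _ M _ _ _ H1 x u) as [U <-].
    rewrite <- (hcomm e1). rewrite <- Hr. rewrite (hcomm e2).
    rewrite <- Mmap_comp. f_equal. apply Mmap_ext. intros y a. simpl. apply Hr. }
  exists (Build_Hom _ M A1 A2 r Hh). exact Hr.
Qed.

End Factor.

Section Main.
Context {Xi : Type} (M : Monad Xi) (L : Family M)
  (HLc : Compositional L) (HLv : Varietal L)
  (Sg : Alphabet Xi) (xi : Xi) (K : Lang M Sg xi) (HK : HasSynAlg K)
  (Syn : Alg M) (syn : Hom (FreeAlg M Sg) Syn) (Hsyn : IsSynAlg K syn).

Lemma fill_box z (s : M (APos Sg) z) :
  fill (sing M (A := APos (SH Sg z)) z (inr eq_refl)) s = s.
Proof. unfold fill. rewrite sing_nat. simpl. apply flat_sing. Qed.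

Lemma synle_K (s t : M (APos Sg) xi) : synle K s t -> K s -> K t.
Proof. intros H. specialize (H (sing M (A := APos (SH Sg xi)) xi (inr eq_refl))). rewrite !fill_box in H. exact H. Qed.

Lemma recog_of (A : Alg M) (e : Hom (FreeAlg M Sg) A) (He : ssurjective e)
  (Hk : forall s t, le A (e xi s) (e xi t) -> K s -> K t) : recog e K.
Proof.
  exists (fun a => exists s, K s /\ e xi s = a). split.
  - intros a b hab [s [Ks <-]]. destruct (He xi b) as [t <-]. exists t. split; auto.
    apply (Hk s t); auto.
  - intros s. split; [intros Ks; exists s; auto|].
    intros [s' [Ks' E]]. apply (Hk s' s); auto. rewrite E. apply le_refl.
Qed.

Lemma def_of_recog (A : Alg M) (f : Hom (FreeAlg M Sg) A) (Hf : recog f K)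
  (D : Subfam L) (G : Alphabet Xi) (HD : SortFin D) (e : Hom (FreeAlg M G) A)
  (He : ssurjective e) (Hm : forall z (s t : M (APos G) z), tle D G s t -> le A (e z s) (e z t)) :
  defL L K.
Proof.
  destruct Hf as [P [HP HPK]].
  eapply defL_ext; [|exact (pull_def M L HLv D G HD A e He Hm Sg f xi P HP)].
  intros s; simpl. symmetry. apply HPK.
Qed.

Lemma syn_recog : recog syn K.
Proof.
  apply recog_of; [apply Hsyn|]. intros s t h. apply synle_K. apply Hsyn. exact h.
Qed.

Lemma syn_finitary : Finitary Syn.
Proof.
  split; [|eapply fingen_surj; apply Hsyn].
  destruct HK as [R [HRe [HR Hfin]]].
  intros z. destruct (Hfin z) as [lq Hlq].
  pose (rep := fun (c : QPos R z) => proj1_sig (constructive_indefinite_description _ (proj2_sig c))).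
  exists (map (fun c => syn z (rep c)) lq).
  intros b. destruct (proj1 Hsyn z b) as [t <-].
  apply in_map_iff. exists (qmap R z t). split; [|apply Hlq].
  unfold rep. destruct (constructive_indefinite_description _ _) as [a Ea]. simpl.
  assert (Hta : proj1_sig (qmap R z t) t) by (simpl; split; apply rel_refl).
  rewrite Ea in Hta. destruct Hta as [h1 h2].
  apply le_antisym; apply (proj2 Hsyn); apply HRe; assumption.
Qed.

Lemma p1_data : defL L K -> exists D : Subfam L, SortFin D /\ ThetaDef D /\
  (forall z (s t : M (APos Sg) z), tle D Sg s t -> synle K s t).
Proof.
  intros [phi Hphi].
  destruct (HLc (Dl M L Sg xi (phi :: nil)) (Dl_finfam M L Sg xi _)) as [D [HD [Hsub HT]]].
  exists D. split; [exact HD|]. split; [exact HT|].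
  intros z s t Hst p Hp.
  destruct (HT Sg) as [R [HRe HR]].
  assert (Hf : R xi (fill p s) (fill p t)).
  { apply cong_fill; [exact HR|]. apply HRe. exact Hst. }
  apply HRe in Hf. apply Hphi. apply Hf.
  - apply Hsub. apply Dl_in. left; reflexivity.
  - apply Hphi. exact Hp.
Qed.

Lemma syn_mono (D : Subfam L) (H : forall z (s t : M (APos Sg) z), tle D Sg s t -> synle K s t) :
  forall z (s t : M (APos Sg) z), tle D Sg s t -> le Syn (syn z s) (syn z t).
Proof. intros z s t h. apply Hsyn. apply H. exact h. Qed.

Lemma i1_9 : defL L K -> exists D : Subfam L, SortFin D /\
  forall s t : M (APos Sg) xi, tle D Sg s t -> K s -> K t.
Proof.
  intros [phi Hphi]. exists (Dl M L Sg xi (phi :: nil)). split; [apply Dl_sortfin|].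
  intros s t Hst Ks. apply Hphi. apply Hst; [apply Dl_in; left; reflexivity|]. apply Hphi; exact Ks.
Qed.

Lemma i9_1 : (exists D : Subfam L, SortFin D /\
  forall s t : M (APos Sg) xi, tle D Sg s t -> K s -> K t) -> defL L K.
Proof. intros [D [HD H]]. eapply uc_def; eauto. Qed.

Lemma i10_1 : (exists D : Subfam L, SortFin D /\
  forall z (s t : M (APos Sg) z), tle D Sg s t -> synle K s t) -> defL L K.
Proof.
  intros [D [HD H]].
  apply (def_of_recog Syn syn syn_recog D Sg HD syn (proj1 Hsyn) (syn_mono D H)).
Qed.

Lemma i1_3 : defL L K -> LDefAlg L Syn.
Proof.
  intros H1. destruct (p1_data H1) as [D [HD [_ Hle]]].
  split; [exact syn_finitary|].
  intros C hC z a.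
  pose (ev := ext M (idC hC) Syn (compmap (Defs.incl Syn C) (iota hC))).
  eapply defL_ext; [|exact (pull_def M L HLv D Sg HD Syn syn (proj1 Hsyn) (syn_mono D Hle)
                               (idC hC) ev z (fun b => le Syn a b) (fun b c h1 h2 => le_trans h2 h1))].
  intros s. simpl. rewrite Mmap_comp. tauto.
Qed.

Lemma i3_2 : LDefAlg L Syn -> exists A : Alg M, LDefAlg L A /\ algRecog A K.
Proof. intros H. exists Syn. split; [exact H|]. exists syn. exact syn_recog. Qed.

Lemma i2_1 : (exists A : Alg M, LDefAlg L A /\ algRecog A K) -> defL L K.
Proof.
  destruct HLv as (vF & vT & vU & vI & vH & vD).
  intros [A [[[Afin _] HA] [f [P [HP HPK]]]]].
  set (C := fun x a => exists c : Sg x, f x (sing M (A := APos Sg) x c) = a).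
  assert (hC : FinSubset C) by apply img_fin.
  pose (ev := ext M (idC hC) A (compmap (Defs.incl A C) (iota hC))).
  pose (kf := fun x (c : Sg x) => (exist (C x) (f x (sing M (A := APos Sg) x c)) (ex_intro _ c eq_refl) : idC hC x)).
  pose (k := ext M Sg (FreeAlg M (idC hC)) (dmap Sg (FreeAlg M (idC hC)) (fun x c => sing M (A := APos (idC hC)) x (kf x c)))).
  assert (Hk : forall z s, ev z (k z s) = f z s).
  { intros z s. change (compH ev k z s = f z s). apply hom_free_eq. intros y c.
    simpl compH. simpl hmap.
    change (ev y (k y (sing M (A := APos Sg) y c)) = f y (sing M (A := APos Sg) y c)).
    unfold k. rewrite ext_sing. simpl fn. rewrite sing_nat. apply alg_unit. }
  destruct (Afin xi) as [la Hla].
  assert (Hd : defL L (fun u : M (APos (idC hC)) xi => exists a, In a la /\ P a /\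
                  le A a (api A xi (Mmap M (Defs.incl A C) xi (Mmap M (iota hC) xi u))))).
  { apply fin_union; [exact HLv|]. intros a _ _. apply (HA C hC xi a). }
  eapply defL_ext; [|exact (vH Sg (idC hC) k xi _ Hd)].
  intros s. simpl. rewrite <- Mmap_comp. symmetry.
  change (K s <-> (exists a : A xi, In a la /\ P a /\ le A a (ev xi (k xi s)))).
  rewrite Hk. rewrite HPK. split.
  - intros Hp. exists (f xi s). split; [apply Hla|]. split; [exact Hp|apply le_refl].
  - intros [a [_ [Pa Ha]]]. eapply HP; eauto.
Qed.



Lemma i1_7 : defL L K -> exists (D : Subfam L) (T : Alg M) (th : Hom (FreeAlg M Sg) T),
  SortFin D /\ ThetaDef D /\ IsTheta D Sg th /\ recog th K.
Proof.
  intros H1. destruct (p1_data H1) as [D [HD [HT Hle]]].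
  destruct (theta_exists M L D HT Sg) as [T [th Ht]].
  exists D, T, th. split; [exact HD|]. split; [exact HT|]. split; [exact Ht|].
  apply recog_of; [apply Ht|]. intros s t h. apply synle_K. apply Hle. apply Ht. exact h.
Qed.

Lemma i6_1 : (exists (D : Subfam L) (G : Alphabet Xi) (T : Alg M) (th : Hom (FreeAlg M G) T),
  SortFin D /\ ThetaDef D /\ IsTheta D G th /\ algRecog T K) -> defL L K.
Proof.
  intros [D [G [T [th [HD [_ [Ht [f Hf]]]]]]]].
  apply (def_of_recog T f Hf D G HD th (proj1 Ht)). intros z s t h. apply Ht. exact h.
Qed.

Lemma i1_5 : defL L K -> exists (D : Subfam L) (T : Alg M) (th : Hom (FreeAlg M Sg) T) (rho : Hom T Syn),
  SortFin D /\ ThetaDef D /\ IsTheta D Sg th /\ ssurjective rho /\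
  forall z (s : M (APos Sg) z), syn z s = rho z (th z s).
Proof.
  intros H1. destruct (p1_data H1) as [D [HD [HT Hle]]].
  destruct (theta_exists M L D HT Sg) as [T [th Ht]].
  destruct (factor M (FreeAlg M Sg) T Syn th syn (proj1 Ht)) as [rho Hr].
  { intros z s t h. apply Hsyn. apply Hle. apply Ht. exact h. }
  exists D, T, th, rho. split; [exact HD|]. split; [exact HT|]. split; [exact Ht|].
  split; [|exact Hr].
  intros z b. destruct (proj1 Hsyn z b) as [s <-]. exists (th z s). symmetry. apply Hr.
Qed.

Lemma i4_1 : (exists (D : Subfam L) (G : Alphabet Xi) (T : Alg M) (th : Hom (FreeAlg M G) T),
  SortFin D /\ ThetaDef D /\ IsTheta D G th /\ isQuot T Syn) -> defL L K.
Proof.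
  intros [D [G [T [th [HD [_ [Ht [r Hr]]]]]]]].
  apply (def_of_recog Syn syn syn_recog D G HD (compH r th)).
  - intros z b. destruct (Hr z b) as [c <-]. destruct (proj1 Ht z c) as [s <-]. exists s. reflexivity.
  - intros z s t h. simpl. apply fn_mono. apply Ht. exact h.
Qed.

Lemma i1_8 : defL L K -> forall (X : Alphabet Xi) (x : Xi) (s t : Hat M X x),
  (forall (D : Subfam L) (G : Alphabet Xi) (T : Alg M) (th : Hom (FreeAlg M G) T),
      SortFin D -> ThetaDef D -> IsTheta D G th -> holdsIn T s t) ->
  holdsIn Syn s t.
Proof.
  intros H1 X x s t Hyp hS beta.
  destruct (i1_5 H1) as [D [T [th [rho [HD [HT [Ht [Hrs Hfac]]]]]]]].
  destruct (lift_hom M X Syn T rho beta Hrs) as [b' Hb'].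
  assert (hT : Finitary T) by (eapply theta_finitary; eauto).
  assert (Hle := Hyp D Sg T th HD HT Ht hT b').
  apply (fn_mono rho) in Hle.
  rewrite (proj2_sig s T Syn hT hS rho b'), (proj2_sig t T Syn hT hS rho b') in Hle.
  assert (E : compH rho b' = beta) by (apply hom_ext; intros y a; simpl; apply Hb').
  rewrite E in Hle. exact Hle.
Qed.



Lemma i8_1 : (forall (X : Alphabet Xi) (x : Xi) (s t : Hat M X x),
  (forall (D : Subfam L) (G : Alphabet Xi) (T : Alg M) (th : Hom (FreeAlg M G) T),
      SortFin D -> ThetaDef D -> IsTheta D G th -> holdsIn T s t) ->
  holdsIn Syn s t) -> defL L K.
Proof.
  intros H8. apply NNPP. intros nP1.
  assert (nP9 : forall F : list (form L Sg xi), exists p : M (APos Sg) xi * M (APos Sg) xi,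
     (forall y, In y F -> sat L y (fst p) -> sat L y (snd p)) /\ K (fst p) /\ ~ K (snd p)).
  { intros F. apply NNPP. intros hn. apply nP1. apply i9_1.
    exists (Dl M L Sg xi F). split; [apply Dl_sortfin|].
    intros s t hst Ks. apply NNPP. intros nKt. apply hn. exists (s, t). simpl.
    split; [|auto]. intros y hy. apply hst. apply Dl_in. exact hy. }
  pose (pk := fun F => proj1_sig (constructive_indefinite_description _ (nP9 F))).
  assert (Hpk : forall F, (forall y, In y F -> sat L y (fst (pk F)) -> sat L y (snd (pk F))) /\
                          K (fst (pk F)) /\ ~ K (snd (pk F))).
  { intros F. unfold pk. destruct (constructive_indefinite_description _ _) as [p hp]. exact hp. }
  destruct (ultra_exists (list (form L Sg xi))
     (fun A => exists F0, forall F, List.incl F0 F -> A F)) as [U [Uf [UI [US [UN UV]]]]].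
  { exists nil. intros; exact I. }
  { intros A C [F1 h1] [F2 h2]. exists (F1 ++ F2). intros F hF. split.
    - apply h1. intros a ha. apply hF. apply in_or_app. left; exact ha.
    - apply h2. intros a ha. apply hF. apply in_or_app. right; exact ha. }
  { intros A C hAC [F1 h1]. exists F1. intros F hF. apply hAC. apply h1. exact hF. }
  { intros A [F1 h1]. exists F1. apply h1. intros a ha; exact ha. }
  assert (UTop : forall A : list (form L Sg xi) -> Prop, (forall F, A F) -> U A).
  { intros A hA. apply Uf. exists nil. intros F _. apply hA. }
  assert (ulim : forall (T : Type) (Hfin : exists la : list T, forall a, In a la)
                        (g : list (form L Sg xi) -> T), exists a, U (fun F => g F = a)).
  { intros T [la Hla] g.
    assert (Hgen : forall l', (exists a, In a l' /\ U (fun F => g F = a)) \/ U (fun F => ~ In (g F) l')).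
    { induction l' as [|a l' IH].
      - right. apply UTop. intros F []. 
      - destruct (UV (fun F => g F = a)) as [h|h].
        + left. exists a. split; [left; reflexivity|exact h].
        + destruct IH as [[b [hb hU]]|hU].
          * left. exists b. split; [right; exact hb|exact hU].
          * right. eapply US; [|exact (UI _ _ h hU)]. simpl. intros F [h1 h2] [e|i]; auto. }
    destruct (Hgen la) as [[a [_ ha]]|hU].
    - exists a; exact ha.
    - destruct (UN _ hU) as [F hF]. exfalso. apply hF. apply Hla. }
  assert (uniq : forall (T : Type) (g : list (form L Sg xi) -> T) a b,
             U (fun F => g F = a) -> U (fun F => g F = b) -> a = b).
  { intros T g a b ha hb. destruct (UN _ (UI _ _ ha hb)) as [F [e1 e2]]. rewrite <- e1. exact e2. }
  pose (limv := fun (sel : list (form L Sg xi) -> M (APos Sg) xi) (A : Alg M) (hA : Finitary A)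
                    (beta : Hom (FreeAlg M Sg) A) =>
     proj1_sig (constructive_indefinite_description _
        (ulim (A xi) (proj1 hA xi) (fun F => beta xi (sel F))))).
  assert (limv_spec : forall sel (A : Alg M) (hA : Finitary A) (beta : Hom (FreeAlg M Sg) A), U (fun F => beta xi (sel F) = limv sel A hA beta)).
  { intros sel A hA beta. unfold limv. destruct (constructive_indefinite_description _ _) as [a ha]. exact ha. }
  assert (hatE : forall sel : list (form L Sg xi) -> M (APos Sg) xi,
            {h : Hat M Sg xi | forall A hA beta, proj1_sig h A hA beta = limv sel A hA beta}).
  { intros sel. unshelve eexists.
    - exists (limv sel). intros A B hA hB phi beta.
      apply (uniq _ (fun F => phi xi (beta xi (sel F)))).
      + eapply US; [|exact (limv_spec sel A hA beta)]. simpl. intros F ->. reflexivity.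
      + exact (limv_spec sel B hB (compH phi beta)).
    - intros; reflexivity. }
  destruct (hatE (fun F => fst (pk F))) as [hs Hhs].
  destruct (hatE (fun F => snd (pk F))) as [ht Hht].
  assert (Hold : holdsIn Syn hs ht).
  { apply H8. intros D G T th HD HT Ht hT beta.
    rewrite Hhs, Hht.
    assert (Hc : U (fun F => le T (beta xi (fst (pk F))) (beta xi (snd (pk F))))).
    { destruct (lift_hom M Sg T (FreeAlg M G) th beta (proj1 Ht)) as [h Hh].
      destruct HLv as (vF & vT & vU & vI & vH & vD).
      destruct (HD G xi) as [l Hl].
      pose (chi := fun y : form L G xi => proj1_sig (constructive_indefinite_description _
                      (vH Sg G h xi _ (defL_sat M L G xi y)))).
      assert (Hchi : forall y u, sat L y (h xi u) <-> sat L (chi y) u).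
      { intros y u. unfold chi. destruct (constructive_indefinite_description _ _) as [c hc]. apply hc. }
      apply Uf. exists (map chi l). intros F hF.
      rewrite <- !Hh. apply Ht.
      apply (proj2 (tle_sig M L D G xi l Hl _ _)).
      intros y hy [phi [h1 [h2 h3]]].
      apply Hchi. apply (proj1 (Hpk F)).
      - apply hF. apply in_map. exact hy.
      - apply Hchi. apply h3. exact h2. }
    destruct (UN _ (UI _ _ Hc (UI _ _ (limv_spec (fun F => fst (pk F)) T hT beta)
                                   (limv_spec (fun F => snd (pk F)) T hT beta)))) as [F [h1 [h2 h3]]].
    rewrite <- h2, <- h3. exact h1. }
  assert (HS := Hold syn_finitary syn). rewrite Hhs, Hht in HS.
  destruct (UN _ (UI _ _ (limv_spec (fun F => fst (pk F)) Syn syn_finitary syn)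
                        (limv_spec (fun F => snd (pk F)) Syn syn_finitary syn))) as [F [h1 h2]].
  rewrite <- h1, <- h2 in HS.
  destruct (Hpk F) as [_ [Ks nKt]]. apply nKt. apply synle_K with (fst (pk F)); [|exact Ks].
  apply Hsyn. exact HS.
Qed.

Lemma main_all :
  let P1 := defL L K in
  let P2 := exists A : Alg M, LDefAlg L A /\ algRecog A K in
  let P3 := LDefAlg L Syn in
  let P4 := exists (D : Subfam L) (G : Alphabet Xi) (T : Alg M) (th : Hom (FreeAlg M G) T),
              SortFin D /\ ThetaDef D /\ IsTheta D G th /\ isQuot T Syn in
  let P5 := exists (D : Subfam L) (T : Alg M) (th : Hom (FreeAlg M Sg) T) (rho : Hom T Syn),
              SortFin D /\ ThetaDef D /\ IsTheta D Sg th /\ ssurjective rho /\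
              forall z (s : M (APos Sg) z), syn z s = rho z (th z s) in
  let P6 := exists (D : Subfam L) (G : Alphabet Xi) (T : Alg M) (th : Hom (FreeAlg M G) T),
              SortFin D /\ ThetaDef D /\ IsTheta D G th /\ algRecog T K in
  let P7 := exists (D : Subfam L) (T : Alg M) (th : Hom (FreeAlg M Sg) T),
              SortFin D /\ ThetaDef D /\ IsTheta D Sg th /\ recog th K in
  let P8 := forall (X : Alphabet Xi) (x : Xi) (s t : Hat M X x),
              (forall (D : Subfam L) (G : Alphabet Xi) (T : Alg M) (th : Hom (FreeAlg M G) T),
                  SortFin D -> ThetaDef D -> IsTheta D G th -> holdsIn T s t) ->
              holdsIn Syn s t in
  let P9 := exists D : Subfam L, SortFin D /\
              forall s t : M (APos Sg) xi, tle D Sg s t -> K s -> K t in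
  let P10 := exists D : Subfam L, SortFin D /\
              forall z (s t : M (APos Sg) z), tle D Sg s t -> synle K s t in
  (P1 <-> P2) /\ (P1 <-> P3) /\ (P1 <-> P4) /\ (P1 <-> P5) /\ (P1 <-> P6) /\
  (P1 <-> P7) /\ (P1 <-> P8) /\ (P1 <-> P9) /\ (P1 <-> P10).
Proof.
  cbv zeta.
  assert (H13 : defL L K <-> LDefAlg L Syn) by (split; [apply i1_3|intros h; apply i2_1, i3_2, h]).
  split; [split; [intros h; apply i3_2, i1_3, h|apply i2_1]|].
  split; [exact H13|].
  split.
  { split; [intros h|apply i4_1].
    destruct (i1_5 h) as [D [T [th [rho [HD [HT [Ht [Hr _]]]]]]]].
    exists D, Sg, T, th. split; [assumption|split; [assumption|split; [assumption|exists rho; exact Hr]]]. }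
  split; [split; [apply i1_5|]|].
  { intros [D [T [th [rho [HD [HT [Ht [Hr _]]]]]]]]. apply i4_1.
    exists D, Sg, T, th. split; [assumption|split; [assumption|split; [assumption|exists rho; exact Hr]]]. }
  split.
  { split; [intros h|apply i6_1].
    destruct (i1_7 h) as [D [T [th [HD [HT [Ht Hr]]]]]].
    exists D, Sg, T, th. split; [assumption|split; [assumption|split; [assumption|exists th; exact Hr]]]. }
  split; [split; [apply i1_7|]|].
  { intros [D [T [th [HD [HT [Ht Hr]]]]]]. apply i6_1.
    exists D, Sg, T, th. split; [assumption|split; [assumption|split; [assumption|exists th; exact Hr]]]. }
  split; [split; [apply i1_8|apply i8_1]|].
  split; [split; [apply i1_9|apply i9_1]|].
  split; [|apply i10_1].
  intros h. destruct (p1_data h) as [D [HD [_ Hle]]]. exists D. split; assumption.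
Qed.

End Main.


Theorem theorem9p13 (Xi : Type) (M : Monad Xi) (L : Family M)
  (HLc : Compositional L) (HLv : Varietal L)
  (Sg : Alphabet Xi) (xi : Xi) (K : Lang M Sg xi) (HK : HasSynAlg K)
  (Syn : Alg M) (syn : Hom (FreeAlg M Sg) Syn) (Hsyn : IsSynAlg K syn) :
  let P1 := defL L K in
  let P2 := exists A : Alg M, LDefAlg L A /\ algRecog A K in
  let P3 := LDefAlg L Syn in
  let P4 := exists (D : Subfam L) (G : Alphabet Xi) (T : Alg M) (th : Hom (FreeAlg M G) T),
              SortFin D /\ ThetaDef D /\ IsTheta D G th /\ isQuot T Syn in
  let P5 := exists (D : Subfam L) (T : Alg M) (th : Hom (FreeAlg M Sg) T) (rho : Hom T Syn),
              SortFin D /\ ThetaDef D /\ IsTheta D Sg th /\ ssurjective rho /\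
              forall z (s : M (APos Sg) z), syn z s = rho z (th z s) in
  let P6 := exists (D : Subfam L) (G : Alphabet Xi) (T : Alg M) (th : Hom (FreeAlg M G) T),
              SortFin D /\ ThetaDef D /\ IsTheta D G th /\ algRecog T K in
  let P7 := exists (D : Subfam L) (T : Alg M) (th : Hom (FreeAlg M Sg) T),
              SortFin D /\ ThetaDef D /\ IsTheta D Sg th /\ recog th K in
  let P8 := forall (X : Alphabet Xi) (x : Xi) (s t : Hat M X x),
              (forall (D : Subfam L) (G : Alphabet Xi) (T : Alg M) (th : Hom (FreeAlg M G) T),
                  SortFin D -> ThetaDef D -> IsTheta D G th -> holdsIn T s t) ->
              holdsIn Syn s t in
  let P9 := exists D : Subfam L, SortFin D /\
              forall s t : M (APos Sg) xi, tle D Sg s t -> K s -> K t in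
  let P10 := exists D : Subfam L, SortFin D /\
              forall z (s t : M (APos Sg) z), tle D Sg s t -> synle K s t in
  (P1 <-> P2) /\ (P1 <-> P3) /\ (P1 <-> P4) /\ (P1 <-> P5) /\ (P1 <-> P6) /\
  (P1 <-> P7) /\ (P1 <-> P8) /\ (P1 <-> P9) /\ (P1 <-> P10).
Proof.
  intros. eapply main_all; eassumption.
Qed.
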